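(* Let $q>0$ and let $U,V\in C^{4}(\mathbb{R}^{2})$ be radially symmetric, $U>0$, $V>0$, viewed as functions of $r=|x|\in[0,\infty)$, such that $$\Delta^{2}(U-V)(r)\ge V^{-q}(r)-U^{-q}(r)\quad\forall r\ge 0,\qquad U(0)=V(0),\qquad U^{(k)}(0)=V^{(k)}(0),\ k=1,2,3.$$ Then $U(r)\ge V(r)$ for all $r\ge 0$. If furthermore $\Delta^{2}(U-V)(0)>0$, then $U(r)>V(r)$ for all $r>0$.
   Context: For radial functions on $\mathbb{R}^{2}$, $\Delta f(r)=\frac1r(rf'(r))'$; derivatives at $r=0$ are one-sided derivatives of the profile. *)

(* Defs.v *)
From Stdlib Require Import Reals.
From Coquelicot Require Import Coquelicot.
Open Scope R_scope.

Definition dx (f : R -> R -> R) : R -> R -> R :=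
  fun x y => Derive (fun t => f t y) x.
Definition dy (f : R -> R -> R) : R -> R -> R :=
  fun x y => Derive (fun t => f x t) y.

Definition cont2 (f : R -> R -> R) : Prop :=
  forall p : R * R, continuous (fun q : R * R => f (fst q) (snd q)) p.

Fixpoint Ck2 (n : nat) (f : R -> R -> R) : Prop :=
  match n with
  | O => cont2 f
  | S m => cont2 f /\
           (forall x y, ex_derive (fun t => f t y) x /\ ex_derive (fun t => f x t) y) /\
           Ck2 m (dx f) /\ Ck2 m (dy f)
  end.

Definition radial (f : R -> R -> R) : Prop :=
  exists g : R -> R, forall x y, f x y = g (sqrt (x ^ 2 + y ^ 2)).

Definition lap (f : R -> R -> R) : R -> R -> R :=
  fun x y => dx (dx f) x y + dy (dy f) x y.
Definition bilap (f : R -> R -> R) : R -> R -> R := lap (lap f).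

(* Main.v *)
Require Import Defs.
From Stdlib Require Import Reals Lra Psatz FunctionalExtensionality.
From Coquelicot Require Import Coquelicot.
Open Scope R_scope.

Lemma mvt_lb (f f' : R -> R) a b m : a <= b ->
  (forall x, is_derive f x (f' x)) -> (forall x, a < x < b -> m <= f' x) ->
  f a + m * (b - a) <= f b.
Proof.
  intros Hab Hd Hm. destruct (Req_dec a b) as [->|Hne]; [lra|].
  destruct (MVT_cor2 f f' a b) as [c [Hc1 Hc2]]; [lra| |].
  { intros c _; apply is_derive_Reals; apply Hd. }
  specialize (Hm c Hc2). nra.
Qed.

Lemma mvt_pos (f f' : R -> R) a b : a < b ->
  (forall x, is_derive f x (f' x)) -> (forall x, a < x < b -> 0 < f' x) ->
  f a < f b.
Proof.
  intros Hab Hd Hm.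
  destruct (MVT_cor2 f f' a b) as [c [Hc1 Hc2]]; [lra| |].
  { intros c _; apply is_derive_Reals; apply Hd. }
  specialize (Hm c Hc2). nra.
Qed.

Lemma prod_deriv (f f' : R -> R) x : is_derive f x (f' x) ->
  is_derive (fun s => s * f s) x (f x + x * f' x).
Proof.
  intro H. 
  pose proof (is_derive_mult (fun s => s) f x 1 (f' x) (is_derive_id x) H (fun n m => Rmult_comm n m)) as H2.
  simpl in H2. unfold plus, mult in H2; simpl in H2. 
  replace (f x + x * f' x) with (1 * f x + x * f' x) by ring. exact H2.
Qed.

Section Core.
Variables g g1 g2 h h1 h2 B : R -> R.
Hypothesis Hg : forall s, is_derive g s (g1 s).
Hypothesis Hg1 : forall s, is_derive g1 s (g2 s).
Hypothesis Hh : forall s, is_derive h s (h1 s).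
Hypothesis Hh1 : forall s, is_derive h1 s (h2 s).
Hypothesis Hhg : forall s, 0 < s -> h s = g2 s + g1 s / s.
Hypothesis HBh : forall s, 0 < s -> B s = h2 s + h1 s / s.

Lemma core (M a b : R) : 0 <= a <= b -> 0 <= M ->
  0 <= a * h1 a -> 0 <= h a -> 0 <= a * g1 a -> 0 <= g a ->
  (forall s, a < s < b -> - M <= B s) ->
  forall t, a <= t <= b -> - M * t * (t - a) <= t * h1 t /\ - M * (b - a) * (t - a) <= h t /\
    - M * (b - a) ^ 2 * t * (t - a) <= t * g1 t /\ - M * (b - a) ^ 3 * (t - a) <= g t.
Proof.
  intros Hab HM D1 D2 D3 D4 HB.
  assert (S1 : forall t, a <= t <= b -> - M * t * (t - a) <= t * h1 t).
  { intros t Ht.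
    pose proof (mvt_lb (fun s => s * h1 s) (fun s => h1 s + s * h2 s) a t (- M * t)
      (proj1 Ht) (fun x => prod_deriv h1 h2 x (Hh1 x))) as H.
    simpl in H. enough (a * h1 a + - M * t * (t - a) <= t * h1 t) by lra.
    apply H. intros x Hx. assert (Hx0 : 0 < x) by lra.
    specialize (HBh x Hx0). specialize (HB x ltac:(lra)).
    assert (E : h1 x + x * h2 x = x * B x) by (rewrite HBh; field; lra).
    rewrite E. nra. }
  assert (S1' : forall s, a < s < b -> - M * (b - a) <= h1 s).
  { intros s Hs. specialize (S1 s ltac:(lra)).
    assert (- M * (s - a) <= h1 s).
    { destruct (Rle_or_lt (- M * (s - a)) (h1 s)) as [?|Hc]; [assumption|].
      exfalso. assert (s * h1 s < s * (- M * (s - a))) by (apply Rmult_lt_compat_l; lra). nra. }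
    nra. }
  assert (S2 : forall t, a <= t <= b -> - M * (b - a) * (t - a) <= h t).
  { intros t Ht. pose proof (mvt_lb h h1 a t (- M * (b - a)) (proj1 Ht) Hh) as H.
    enough (h a + - M * (b - a) * (t - a) <= h t) by lra. apply H.
    intros x Hx; apply S1'; lra. }
  assert (S3 : forall t, a <= t <= b -> - M * (b - a) ^ 2 * t * (t - a) <= t * g1 t).
  { intros t Ht.
    pose proof (mvt_lb (fun s => s * g1 s) (fun s => g1 s + s * g2 s) a t (- M * (b - a) ^ 2 * t)
      (proj1 Ht) (fun x => prod_deriv g1 g2 x (Hg1 x))) as H.
    simpl in H. enough (a * g1 a + - M * (b - a) ^ 2 * t * (t - a) <= t * g1 t) by lra.
    apply H. intros x Hx. assert (Hx0 : 0 < x) by lra.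
    specialize (Hhg x Hx0). specialize (S2 x ltac:(lra)).
    assert (E : g1 x + x * g2 x = x * h x) by (rewrite Hhg; field; lra).
    rewrite E.
    assert (0 <= M * (b - a) * (x - a)) by (apply Rmult_le_pos; [apply Rmult_le_pos|]; lra).
    assert (M * (b - a) * (x - a) * x <= M * (b - a) ^ 2 * t).
    { assert (x - a <= b - a) by lra. assert (x <= t) by lra.
      assert (0 <= M * (b - a)) by (apply Rmult_le_pos; lra).
      replace (M * (b - a) ^ 2 * t) with ((M * (b - a)) * ((b - a) * t)) by ring.
      replace (M * (b - a) * (x - a) * x) with ((M * (b - a)) * ((x - a) * x)) by ring.
      apply Rmult_le_compat_l; [lra|]. apply Rmult_le_compat; lra. }
    nra. }
  assert (S3' : forall s, a < s < b -> - M * (b - a) ^ 3 <= g1 s).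
  { intros s Hs. specialize (S3 s ltac:(lra)).
    assert (- M * (b - a) ^ 2 * (s - a) <= g1 s).
    { destruct (Rle_or_lt (- M * (b - a) ^ 2 * (s - a)) (g1 s)) as [?|Hc]; [assumption|].
      exfalso. assert (s * g1 s < s * (- M * (b - a) ^ 2 * (s - a))) by (apply Rmult_lt_compat_l; lra). nra. }
    assert (0 <= M * (b - a) ^ 2) by (apply Rmult_le_pos; [lra| apply pow2_ge_0]).
    nra. }
  intros t Ht. split; [auto|split; [auto|split; [auto|]]].
  pose proof (mvt_lb g g1 a t (- M * (b - a) ^ 3) (proj1 Ht) Hg) as H.
  enough (g a + - M * (b - a) ^ 3 * (t - a) <= g t) by lra. apply H.
  intros x Hx; apply S3'; lra.
Qed.

Lemma deriv_cont (f : R -> R) x l : is_derive f x l -> continuity_pt f x.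
Proof.
  intro H. apply derivable_continuous_pt. exists l. apply is_derive_Reals; exact H.
Qed.

Definition Q (a : R) := 0 <= a * h1 a /\ 0 <= h a /\ 0 <= a * g1 a /\ 0 <= g a /\
  forall s, 0 <= s <= a -> 0 <= g s.

Lemma step (K T : R) : 0 <= K ->
  (forall s, 0 <= s <= T -> K * Rmin (g s) 0 <= B s) ->
  forall a, 0 <= a <= T -> Q a -> forall t, a <= t <= Rmin (a + / (K + 1)) T -> Q t.
Proof.
  intros HK HB a Ha [D1 [D2 [D3 [D4 D5]]]].
  set (d := / (K + 1)). assert (Hd : 0 < d) by (apply Rinv_0_lt_compat; lra).
  assert (Hd1 : d <= 1).
  { unfold d. rewrite <- Rinv_1. apply Rinv_le_contravar; lra. }
  assert (HKd : K * d < 1).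
  { unfold d. apply (Rmult_lt_reg_r (K + 1)); [lra|]. rewrite Rmult_assoc, Rinv_l; lra. }
  set (b := Rmin (a + d) T).
  assert (Hb1 : a <= b) by (unfold b; apply Rmin_glb; lra).
  assert (Hb2 : b - a <= d) by (unfold b; pose proof (Rmin_l (a + d) T); lra).
  assert (Hb3 : b <= T) by (unfold b; apply Rmin_r).
  assert (Gpos : forall s, a <= s <= b -> 0 <= g s).
  { destruct (continuity_ab_min g a b Hb1) as [mx [Hmx1 Hmx2]].
    { intros c _; apply (deriv_cont g c (g1 c)); apply Hg. }
    destruct (Rle_or_lt 0 (g mx)) as [Hm|Hm].
    { intros s Hs. specialize (Hmx1 s Hs). lra. }
    exfalso. set (N := - g mx). assert (HN : 0 < N) by (unfold N; lra).
    assert (HBl : forall s, a < s < b -> - (K * N) <= B s).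
    { intros s Hs. specialize (HB s ltac:(lra)). specialize (Hmx1 s ltac:(lra)).
      assert (- N <= Rmin (g s) 0) by (apply Rmin_glb; unfold N; lra).
      assert (K * (- N) <= K * Rmin (g s) 0) by (apply Rmult_le_compat_l; lra). lra. }
    destruct (core (K * N) a b ltac:(lra) ltac:(apply Rmult_le_pos; lra) D1 D2 D3 D4 HBl mx Hmx2)
      as [_ [_ [_ H]]].
    fold N in H.
    assert (E1 : (b - a) ^ 3 * (mx - a) <= d ^ 4).
    { replace (d ^ 4) with (d ^ 3 * d) by ring. apply Rmult_le_compat; try lra.
      apply pow_le; lra. apply pow_incr; lra. }
    assert (E2 : d ^ 4 <= d).
    { assert (d ^ 3 <= 1 ^ 3) by (apply pow_incr; lra).
      replace (d ^ 4) with (d * d ^ 3) by ring. simpl in *. nra. }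
    assert (E3 : K * N * ((b - a) ^ 3 * (mx - a)) <= K * N * d).
    { apply Rmult_le_compat_l; [apply Rmult_le_pos; lra | lra]. }
    assert (K * N * d < N).
    { replace (K * N * d) with (N * (K * d)) by ring. nra. }
    unfold N in *. nra. }
  assert (HB0 : forall s, a < s < b -> - 0 <= B s).
  { intros s Hs. specialize (HB s ltac:(lra)). rewrite Rmin_right in HB by (apply Gpos; lra). lra. }
  intros t Ht.
  destruct (core 0 a b ltac:(lra) ltac:(lra) D1 D2 D3 D4 HB0 t ltac:(lra)) as [E1 [E2 [E3 E4]]].
  repeat split; try lra.
  intros s Hs. destruct (Rle_or_lt s a); [apply D5; lra| apply Gpos; lra].
Qed.

Lemma nonneg_main (K T : R) : 0 <= K -> g 0 = 0 -> h 0 = 0 ->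
  (forall s, 0 <= s <= T -> K * Rmin (g s) 0 <= B s) ->
  forall t, 0 <= t <= T -> Q t.
Proof.
  intros HK g0 h0 HB.
  set (d := / (K + 1)). assert (Hd : 0 < d) by (apply Rinv_0_lt_compat; lra).
  assert (R : forall n : nat, forall t, 0 <= t <= T -> t <= INR n * d -> Q t).
  { induction n as [|n IH]; intros t Ht Htn.
    - simpl in Htn. assert (t = 0) by lra. subst t. unfold Q. rewrite g0, h0.
      repeat split; try lra. intros s Hs. replace s with 0 by lra. lra.
    - rewrite S_INR in Htn. destruct (Rle_or_lt t (INR n * d)) as [Hl|Hl]; [apply IH; lra|].
      assert (0 <= INR n) by apply pos_INR.
      assert (0 <= INR n * d) by (apply Rmult_le_pos; lra).
      apply (step K T HK HB (INR n * d)); [lra | apply IH; lra | ].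
      split; [lra|]. apply Rmin_glb; fold d; lra. }
  intros t Ht. destruct (INR_unbounded (t / d)) as [n Hn].
  apply (R n t Ht). apply Rlt_le. apply (Rmult_lt_reg_r (/ d)). apply Rinv_0_lt_compat; lra.
  rewrite Rmult_assoc, Rinv_r by lra. lra.
Qed.

Lemma pos_div (x y : R) : 0 < x -> 0 < x * y -> 0 < y.
Proof. intros. destruct (Rle_or_lt y 0); [|auto]. nra. Qed.
Lemma nneg_div (x y : R) : 0 < x -> 0 <= x * y -> 0 <= y.
Proof. intros. destruct (Rle_or_lt 0 y); [auto|]. nra. Qed.

Lemma strict_main (eps : R) : g 0 = 0 -> h 0 = 0 ->
  (forall s, 0 < s -> 0 <= B s) -> 0 < eps -> (forall s, 0 < s < eps -> 0 < B s) ->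
  forall t, 0 < t -> 0 < g t.
Proof.
  intros g0 h0 HB He HBe t Ht.
  set (e := Rmin t (eps / 2)).
  assert (He1 : 0 < e) by (unfold e; apply Rmin_glb_lt; lra).
  assert (He2 : e <= t) by apply Rmin_l.
  assert (He3 : e < eps) by (unfold e; pose proof (Rmin_r t (eps/2)); lra).
  assert (P1 : forall s, 0 < s <= e -> 0 < s * h1 s).
  { intros s Hs. pose proof (mvt_pos (fun s => s * h1 s) (fun s => h1 s + s * h2 s) 0 s
      ltac:(lra) (fun x => prod_deriv h1 h2 x (Hh1 x))) as H. simpl in H.
    rewrite Rmult_0_l in H. apply H. intros x Hx.
    specialize (HBh x ltac:(lra)). specialize (HBe x ltac:(lra)).
    assert (E : h1 x + x * h2 x = x * B x) by (rewrite HBh; field; lra).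
    rewrite E. apply Rmult_lt_0_compat; lra. }
  assert (P2 : forall s, 0 < s <= e -> 0 < h s).
  { intros s Hs. rewrite <- h0. apply (mvt_pos h h1 0 s ltac:(lra) Hh).
    intros x Hx. apply (pos_div x); [lra|]. apply P1; lra. }
  assert (P3 : forall s, 0 < s <= e -> 0 < s * g1 s).
  { intros s Hs. pose proof (mvt_pos (fun s => s * g1 s) (fun s => g1 s + s * g2 s) 0 s
      ltac:(lra) (fun x => prod_deriv g1 g2 x (Hg1 x))) as H. simpl in H.
    rewrite Rmult_0_l in H. apply H. intros x Hx.
    specialize (Hhg x ltac:(lra)).
    assert (E : g1 x + x * g2 x = x * h x) by (rewrite Hhg; field; lra).
    rewrite E. apply Rmult_lt_0_compat; [lra|]. apply P2; lra. }
  assert (P4 : 0 < g e).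
  { rewrite <- g0. apply (mvt_pos g g1 0 e ltac:(lra) Hg).
    intros x Hx. apply (pos_div x); [lra|]. apply P3; lra. }
  assert (G1 : forall s, 0 < s -> 0 <= g1 s).
  { intros s Hs. apply (nneg_div s); [lra|].
    assert (HB0 : forall x, 0 < x < s -> - 0 <= B x) by (intros x Hx; specialize (HB x ltac:(lra)); lra).
    destruct (core 0 0 s ltac:(lra) ltac:(lra) ltac:(lra) ltac:(lra) ltac:(lra) ltac:(lra) HB0 s ltac:(lra))
      as [_ [_ [H _]]]. lra. }
  pose proof (mvt_lb g g1 e t 0 He2 Hg) as H.
  enough (g e + 0 * (t - e) <= g t) by lra. apply H. intros x Hx; apply G1; lra.
Qed.
End Core.

Lemma d_rho (y t : R) : 0 < t ^ 2 + y ^ 2 ->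
  is_derive (fun s => sqrt (s ^ 2 + y ^ 2)) t (t / sqrt (t ^ 2 + y ^ 2)).
Proof.
  intro H. auto_derive. lra.
  replace (t*(t*1)+y*(y*1)) with (t^2+y^2) by ring.
  assert (0 < sqrt (t^2+y^2)) by (apply sqrt_lt_R0; lra). field. lra.
Qed.

Lemma d_q (y t : R) : 0 < t ^ 2 + y ^ 2 ->
  is_derive (fun s => s / sqrt (s ^ 2 + y ^ 2)) t (y ^ 2 / (sqrt (t ^ 2 + y ^ 2)) ^ 3).
Proof.
  intro H. auto_derive. 
  replace (t*(t*1)+y*(y*1)) with (t^2+y^2) by ring. 
  assert (0 < sqrt (t^2+y^2)) by (apply sqrt_lt_R0; lra). repeat split; lra.
  replace (t*(t*1)+y*(y*1)) with (t^2+y^2) by ring.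
  assert (0 < sqrt (t^2+y^2)) by (apply sqrt_lt_R0; lra).
  assert (E : sqrt (t^2+y^2) * sqrt (t^2+y^2) = t^2+y^2) by (apply sqrt_sqrt; lra).
  set (r := sqrt (t^2+y^2)) in *.
  replace (y^2) with (r*r - t^2) by lra. field. lra.
Qed.

Lemma loc_pos (x y : R) : 0 < x ^ 2 + y ^ 2 -> locally x (fun t => 0 < t ^ 2 + y ^ 2).
Proof.
  intro H. destruct (Req_dec y 0) as [->|Hy].
  - assert (Hx : x <> 0) by (intro; subst; lra).
    assert (Hax : 0 < Rabs x) by (apply Rabs_pos_lt; auto).
    exists (mkposreal _ Hax). intros t Ht. simpl in Ht.
    unfold ball in Ht; simpl in Ht; unfold AbsRing_ball, abs, minus, plus, opp in Ht; simpl in Ht.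
    assert (t <> 0).
    { intro; subst t. rewrite Rplus_0_l, Rabs_Ropp in Ht. lra. }
    assert (0 < t ^ 2) by (apply pow2_gt_0; auto). lra.
  - apply filter_forall. intros t. assert (0 < y ^ 2) by (apply pow2_gt_0; auto). 
    pose proof (pow2_ge_0 t). lra.
Qed.

Lemma dx_rad (f : R -> R -> R) (p p1 : R -> R) :
  (forall x y, f x y = p (sqrt (x ^ 2 + y ^ 2))) ->
  (forall s, is_derive p s (p1 s)) ->
  forall t y, 0 < t ^ 2 + y ^ 2 ->
  is_derive (fun s => f s y) t (p1 (sqrt (t ^ 2 + y ^ 2)) * (t / sqrt (t ^ 2 + y ^ 2))).
Proof.
  intros Hf Hp t y H.
  apply (is_derive_ext (fun s => p (sqrt (s ^ 2 + y ^ 2)))); [intros; symmetry; apply Hf|].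
  pose proof (is_derive_comp p (fun s => sqrt (s ^ 2 + y ^ 2)) t _ _ (Hp _) (d_rho y t H)) as E.
  simpl in E. unfold scal in E; simpl in E; unfold mult in E; simpl in E.
  rewrite Rmult_comm. exact E.
Qed.

Lemma is_derive_eq (f : R -> R) x l l' : is_derive f x l -> l = l' -> is_derive f x l'.
Proof. intros H ->; exact H. Qed.

Lemma dxx_rad (f : R -> R -> R) (p p1 p2 : R -> R) :
  (forall x y, f x y = p (sqrt (x ^ 2 + y ^ 2))) ->
  (forall s, is_derive p s (p1 s)) -> (forall s, is_derive p1 s (p2 s)) ->
  forall x y, 0 < x ^ 2 + y ^ 2 ->
  dx (dx f) x y = p2 (sqrt (x ^ 2 + y ^ 2)) * (x / sqrt (x ^ 2 + y ^ 2)) * (x / sqrt (x ^ 2 + y ^ 2))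
                  + p1 (sqrt (x ^ 2 + y ^ 2)) * (y ^ 2 / (sqrt (x ^ 2 + y ^ 2)) ^ 3).
Proof.
  intros Hf Hp Hp1 x y H. unfold dx at 1. apply is_derive_unique.
  apply (is_derive_ext_loc (fun t => p1 (sqrt (t ^ 2 + y ^ 2)) * (t / sqrt (t ^ 2 + y ^ 2)))).
  { generalize (loc_pos x y H). apply filter_imp. intros t Ht. unfold dx.
    symmetry. apply is_derive_unique. apply (dx_rad f p p1 Hf Hp t y Ht). }
  pose proof (is_derive_comp p1 (fun s => sqrt (s ^ 2 + y ^ 2)) x _ _ (Hp1 _) (d_rho y x H)) as E1.
  pose proof (is_derive_mult _ _ x _ _ E1 (d_q y x H) (fun n m => Rmult_comm n m)) as E2.
  eapply is_derive_eq; [exact E2|].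
  unfold scal, plus, mult; simpl. unfold mult; simpl. ring.
Qed.

Lemma lap_rad (f : R -> R -> R) (p p1 p2 : R -> R) :
  (forall x y, f x y = p (sqrt (x ^ 2 + y ^ 2))) ->
  (forall s, is_derive p s (p1 s)) -> (forall s, is_derive p1 s (p2 s)) ->
  forall x y, 0 < x ^ 2 + y ^ 2 ->
  lap f x y = p2 (sqrt (x ^ 2 + y ^ 2)) + p1 (sqrt (x ^ 2 + y ^ 2)) / sqrt (x ^ 2 + y ^ 2).
Proof.
  intros Hf Hp Hp1 x y H. unfold lap.
  change (dy (dy f) x y) with (dx (dx (fun a b => f b a)) y x).
  rewrite (dxx_rad f p p1 p2 Hf Hp Hp1 x y H).
  rewrite (dxx_rad (fun a b => f b a) p p1 p2) by
    (try (intros a b; rewrite Hf, Rplus_comm; reflexivity); auto; lra).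
  rewrite (Rplus_comm (y ^ 2) (x ^ 2)).
  assert (Hr : 0 < sqrt (x^2+y^2)) by (apply sqrt_lt_R0; lra).
  assert (E : sqrt (x^2+y^2) * sqrt (x^2+y^2) = x^2+y^2) by (apply sqrt_sqrt; lra).
  set (r := sqrt (x^2+y^2)) in *.
  transitivity (p2 r * ((x^2+y^2) / (r*r)) + p1 r * ((x^2+y^2) / (r * (r * r)))).
  field. lra. rewrite <- E. field. lra.
Qed.

Lemma Ck2_S (n : nat) : forall f, Ck2 (S n) f -> Ck2 n f.
Proof.
  induction n as [|n IH]; intros f H.
  - exact (proj1 H).
  - destruct H as [H1 [H2 [H3 H4]]]. split; [exact H1|]. split; [exact H2|].
    split; apply IH; assumption.
Qed.

Lemma cont2_bin (op : R -> R -> R) (U V : R -> R -> R) :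
  (forall p : R * R, continuous (fun q : R * R => op (fst q) (snd q)) p) ->
  cont2 U -> cont2 V -> cont2 (fun x y => op (U x y) (V x y)).
Proof.
  intros Hop HU HV p.
  apply (continuous_comp_2 (fun q : R * R => U (fst q) (snd q)) (fun q : R * R => V (fst q) (snd q)) op p);
    auto.
Qed.

Lemma cont_minus_op : forall p : R * R, continuous (fun q : R * R => fst q - snd q) p.
Proof.
  intros p. apply (continuous_minus (fun q : R * R => fst q) (fun q : R * R => snd q)).
  apply continuous_fst. apply continuous_snd.
Qed.
Lemma cont_plus_op : forall p : R * R, continuous (fun q : R * R => fst q + snd q) p.
Proof.
  intros p. apply (continuous_plus (fun q : R * R => fst q) (fun q : R * R => snd q)).
  apply continuous_fst. apply continuous_snd.
Qed.

Lemma t1 U V : cont2 U -> cont2 V -> cont2 (fun x y => U x y - V x y).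
Proof. intros HU HV. exact (cont2_bin Rminus U V cont_minus_op HU HV). Qed.
Lemma t2 U V : cont2 U -> cont2 V -> cont2 (fun x y => U x y + V x y).
Proof. intros HU HV. exact (cont2_bin Rplus U V cont_plus_op HU HV). Qed.

Lemma Ck2_minus (n : nat) : forall U V, Ck2 n U -> Ck2 n V -> Ck2 n (fun x y => U x y - V x y).
Proof.
  induction n as [|n IH]; intros U V HU HV.
  - simpl in *. apply t1; assumption.
  - destruct HU as [U1 [U2 [U3 U4]]]. destruct HV as [V1 [V2 [V3 V4]]].
    assert (Ex : dx (fun x y => U x y - V x y) = fun x y => dx U x y - dx V x y).
    { apply functional_extensionality; intro x; apply functional_extensionality; intro y.
      unfold dx. exact (Derive_minus (fun t => U t y) (fun t => V t y) x (proj1 (U2 x y)) (proj1 (V2 x y))). }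
    assert (Ey : dy (fun x y => U x y - V x y) = fun x y => dy U x y - dy V x y).
    { apply functional_extensionality; intro x; apply functional_extensionality; intro y.
      unfold dy. exact (Derive_minus (fun t => U x t) (fun t => V x t) y (proj2 (U2 x y)) (proj2 (V2 x y))). }
    split; [apply t1; assumption|].
    split.
    { intros x y. destruct (U2 x y) as [A1 A2], (V2 x y) as [B1 B2]. split.
      exact (ex_derive_minus (fun t => U t y) (fun t => V t y) x A1 B1).
      exact (ex_derive_minus (fun t => U x t) (fun t => V x t) y A2 B2). }
    rewrite Ex, Ey. split; apply IH; assumption.
Qed.

Lemma Ck2_plus (n : nat) : forall U V, Ck2 n U -> Ck2 n V -> Ck2 n (fun x y => U x y + V x y).
Proof.
  induction n as [|n IH]; intros U V HU HV.
  - simpl in *. apply t2; assumption.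
  - destruct HU as [U1 [U2 [U3 U4]]]. destruct HV as [V1 [V2 [V3 V4]]].
    assert (Ex : dx (fun x y => U x y + V x y) = fun x y => dx U x y + dx V x y).
    { apply functional_extensionality; intro x; apply functional_extensionality; intro y.
      unfold dx. exact (Derive_plus (fun t => U t y) (fun t => V t y) x (proj1 (U2 x y)) (proj1 (V2 x y))). }
    assert (Ey : dy (fun x y => U x y + V x y) = fun x y => dy U x y + dy V x y).
    { apply functional_extensionality; intro x; apply functional_extensionality; intro y.
      unfold dy. exact (Derive_plus (fun t => U x t) (fun t => V x t) y (proj2 (U2 x y)) (proj2 (V2 x y))). }
    split; [apply t2; assumption|].
    split.
    { intros x y. destruct (U2 x y) as [A1 A2], (V2 x y) as [B1 B2]. split.
      exact (ex_derive_plus (fun t => U t y) (fun t => V t y) x A1 B1).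
      exact (ex_derive_plus (fun t => U x t) (fun t => V x t) y A2 B2). }
    rewrite Ex, Ey. split; apply IH; assumption.
Qed.

Lemma Ck2_lap (n : nat) f : Ck2 (S (S n)) f -> Ck2 n (lap f).
Proof.
  intros [_ [_ [[_ [_ [H1 _]]] [_ [_ [_ H2]]]]]].
  exact (Ck2_plus n _ _ H1 H2).
Qed.

Lemma Ck2_axis (n : nat) f : Ck2 (S n) f -> forall t, is_derive (fun s => f s 0) t (dx f t 0).
Proof.
  intros [_ [H _]] t. apply Derive_correct. exact (proj1 (H t 0)).
Qed.

Lemma cont2_axis f : cont2 f -> forall t, continuous (fun s => f s 0) t.
Proof.
  intros H t. apply (continuous_comp_2 (fun s => s) (fun _ => 0) f t).
  apply continuous_id. apply continuous_const. apply (H (t, 0)).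
Qed.

Lemma Rpower_pos x y : 0 < Rpower x y.
Proof. unfold Rpower. apply exp_pos. Qed.

Lemma Rpower_neg_anti (a b c : R) : 0 < c -> 0 < a <= b -> Rpower b (- c) <= Rpower a (- c).
Proof.
  intros Hc Hab. rewrite !Rpower_Ropp. apply Rinv_le_contravar. apply Rpower_pos.
  apply Rle_Rpower_l; lra.
Qed.

Lemma rp_lip q m u v : 0 < q -> 0 < m -> m <= u -> m <= v ->
  q * Rpower m (- q - 1) * Rmin (u - v) 0 <= Rpower v (- q) - Rpower u (- q).
Proof.
  intros Hq Hm Hu Hv. destruct (Rle_or_lt v u) as [Hvu|Hvu].
  - rewrite Rmin_right by lra. pose proof (Rpower_neg_anti v u q Hq ltac:(lra)). lra.
  - rewrite Rmin_left by lra.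
    destruct (MVT_cor2 (fun x => Rpower x (- q)) (fun x => - q * Rpower x (- q - 1)) u v Hvu)
      as [c [Hc1 Hc2]].
    { intros c Hc. apply derivable_pt_lim_power. lra. }
    rewrite Hc1.
    assert (E : Rpower c (- q - 1) <= Rpower m (- q - 1)).
    { replace (- q - 1) with (- (q + 1)) by ring. apply Rpower_neg_anti; lra. }
    assert (0 <= q * (v - u)) by (apply Rmult_le_pos; lra).
    assert (q * (v - u) * Rpower c (- q - 1) <= q * (v - u) * Rpower m (- q - 1))
      by (apply Rmult_le_compat_l; lra).
    lra.
Qed.

Lemma rad_prof (f : R -> R -> R) : radial f -> forall x y, f x y = f (sqrt (x ^ 2 + y ^ 2)) 0.
Proof.
  intros [G HG] x y. rewrite (HG x y), (HG (sqrt (x ^ 2 + y ^ 2)) 0). f_equal. f_equal.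
  rewrite pow2_sqrt. ring. pose proof (pow2_ge_0 x); pose proof (pow2_ge_0 y); lra.
Qed.

Lemma sqrt_axis s : 0 <= s -> sqrt (s ^ 2 + 0 ^ 2) = s.
Proof. intro. replace (s ^ 2 + 0 ^ 2) with (s ^ 2) by ring. apply sqrt_pow2; auto. Qed.

Theorem mainTheorem14 (q : R) (U V : R -> R -> R) :
  0 < q ->
  Ck2 4 U -> Ck2 4 V -> radial U -> radial V ->
  (forall x y, 0 < U x y) -> (forall x y, 0 < V x y) ->
  (forall r, 0 <= r ->
     bilap (fun x y => U x y - V x y) r 0 >= Rpower (V r 0) (- q) - Rpower (U r 0) (- q)) ->
  U 0 0 = V 0 0 ->
  (forall k : nat, (1 <= k <= 3)%nat ->
     Derive_n (fun r => U r 0) k 0 = Derive_n (fun r => V r 0) k 0) ->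
  (forall r, 0 <= r -> U r 0 >= V r 0) /\
  (bilap (fun x y => U x y - V x y) 0 0 > 0 -> forall r, 0 < r -> U r 0 > V r 0).
Proof.
  intros Hq CU CV RU RV PU PV HB H0 Hk.
  set (w := fun x y => U x y - V x y).
  assert (Cw : Ck2 4 w) by exact (Ck2_minus 4 U V CU CV).
  set (g := fun s => w s 0). set (g1 := fun s => dx w s 0). set (g2 := fun s => dx (dx w) s 0).
  assert (Rw : forall x y, w x y = g (sqrt (x ^ 2 + y ^ 2))).
  { intros x y. unfold g, w. rewrite (rad_prof U RU x y), (rad_prof V RV x y). reflexivity. }
  assert (Hg : forall s, is_derive g s (g1 s)) by exact (Ck2_axis 3 w Cw).
  assert (Hg1 : forall s, is_derive g1 s (g2 s)).
  { destruct Cw as [_ [_ [C _]]]. exact (Ck2_axis 2 (dx w) C). }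
  set (L := lap w).
  assert (CL : Ck2 2 L) by exact (Ck2_lap 2 w Cw).
  set (h := fun s => L s 0). set (h1 := fun s => dx L s 0). set (h2 := fun s => dx (dx L) s 0).
  assert (Hh : forall s, is_derive h s (h1 s)) by exact (Ck2_axis 1 L CL).
  assert (Hh1 : forall s, is_derive h1 s (h2 s)).
  { destruct CL as [_ [_ [C _]]]. exact (Ck2_axis 0 (dx L) C). }
  assert (Hhg : forall s, 0 < s -> h s = g2 s + g1 s / s).
  { intros s Hs. unfold h, L.
    rewrite (lap_rad w g g1 g2 Rw Hg Hg1 s 0) by (simpl; nra).
    rewrite sqrt_axis by lra. reflexivity. }
  assert (RL : forall x y, L x y = h (sqrt (x ^ 2 + y ^ 2))).
  { intros x y. destruct (Rlt_or_le 0 (x ^ 2 + y ^ 2)) as [Hp|Hp].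
    - unfold h, L. rewrite (lap_rad w g g1 g2 Rw Hg Hg1 x y Hp).
      assert (Hr : 0 < sqrt (x ^ 2 + y ^ 2)) by (apply sqrt_lt_R0; lra).
      rewrite (lap_rad w g g1 g2 Rw Hg Hg1 (sqrt (x ^ 2 + y ^ 2)) 0) by (rewrite pow2_sqrt by lra; replace (0 ^ 2) with 0 by ring; lra).
      rewrite sqrt_axis by lra. reflexivity.
    - assert (x = 0) by nra. assert (y = 0) by nra. subst x y.
      replace (0 ^ 2 + 0 ^ 2) with 0 by ring. rewrite sqrt_0. reflexivity. }
  set (B := fun s => bilap w s 0).
  assert (HBh : forall s, 0 < s -> B s = h2 s + h1 s / s).
  { intros s Hs. unfold B, bilap. fold L.
    rewrite (lap_rad L h h1 h2 RL Hh Hh1 s 0) by (simpl; nra).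
    rewrite sqrt_axis by lra. reflexivity. }
  assert (g0 : g 0 = 0) by (unfold g, w; rewrite H0; ring).
  assert (Wsym : (fun a b => w b a) = w).
  { apply functional_extensionality; intro a; apply functional_extensionality; intro b.
    rewrite (Rw b a), (Rw a b), (Rplus_comm (b ^ 2)). reflexivity. }
  assert (DU : forall x y, ex_derive (fun t => dx U t y) x).
  { intros x y. destruct CU as [_ [_ [[_ [E _]] _]]]. exact (proj1 (E x y)). }
  assert (DV : forall x y, ex_derive (fun t => dx V t y) x).
  { intros x y. destruct CV as [_ [_ [[_ [E _]] _]]]. exact (proj1 (E x y)). }
  assert (Ex : dx w = fun x y => dx U x y - dx V x y).
  { apply functional_extensionality; intro x; apply functional_extensionality; intro y.
    destruct CU as [_ [EU _]]. destruct CV as [_ [EV _]].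
    unfold dx, w. exact (Derive_minus (fun t => U t y) (fun t => V t y) x (proj1 (EU x y)) (proj1 (EV x y))). }
  assert (g20 : g2 0 = 0).
  { unfold g2. rewrite Ex. unfold dx at 1.
    rewrite (Derive_minus (fun t => dx U t 0) (fun t => dx V t 0) 0 (DU 0 0) (DV 0 0)).
    pose proof (Hk 2%nat ltac:(lia)) as E. change (dx (dx U) 0 0 = dx (dx V) 0 0) in E.
    change (dx (dx U) 0 0 - dx (dx V) 0 0 = 0). rewrite E. ring. }
  assert (h0 : h 0 = 0).
  { unfold h, L, lap. change (dy (dy w) 0 0) with (dx (dx (fun a b => w b a)) 0 0).
    rewrite Wsym. fold (g2 0). rewrite g20. ring. }
  assert (Part1 : forall r, 0 <= r -> 0 <= g r).
  { intros T HT.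
    assert (Cu : forall c, continuity_pt (fun s => U s 0) c).
    { intro c. apply (deriv_cont _ c (dx U c 0)). exact (Ck2_axis 3 U CU c). }
    assert (Cv : forall c, continuity_pt (fun s => V s 0) c).
    { intro c. apply (deriv_cont _ c (dx V c 0)). exact (Ck2_axis 3 V CV c). }
    destruct (continuity_ab_min (fun s => U s 0) 0 T HT (fun c _ => Cu c)) as [mu [Hmu1 Hmu2]].
    destruct (continuity_ab_min (fun s => V s 0) 0 T HT (fun c _ => Cv c)) as [mv [Hmv1 Hmv2]].
    set (m := Rmin (U mu 0) (V mv 0)).
    assert (Hm : 0 < m) by (unfold m; apply Rmin_glb_lt; auto).
    set (K := q * Rpower m (- q - 1)).
    assert (HK : 0 <= K) by (unfold K; pose proof (Rpower_pos m (- q - 1)); nra).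
    assert (HBK : forall s, 0 <= s <= T -> K * Rmin (g s) 0 <= B s).
    { intros s Hs. specialize (HB s ltac:(lra)).
      assert (m <= U s 0) by (unfold m; pose proof (Rmin_l (U mu 0) (V mv 0)); specialize (Hmu1 s Hs); simpl in Hmu1; lra).
      assert (m <= V s 0) by (unfold m; pose proof (Rmin_r (U mu 0) (V mv 0)); specialize (Hmv1 s Hs); simpl in Hmv1; lra).
      pose proof (rp_lip q m (U s 0) (V s 0) Hq Hm ltac:(assumption) ltac:(assumption)).
      change (q * Rpower m (- q - 1) * Rmin (U s 0 - V s 0) 0 <= bilap w s 0). change (bilap w s 0 >= Rpower (V s 0) (- q) - Rpower (U s 0) (- q)) in HB. lra. }
    destruct (nonneg_main g g1 g2 h h1 h2 B Hg Hg1 Hh Hh1 Hhg HBh K T HK g0 h0 HBK T ltac:(lra))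
      as [_ [_ [_ [D _]]]]. exact D. }
  split.
  { intros r Hr. specialize (Part1 r Hr). unfold g, w in Part1; cbv beta in Part1. lra. }
  intros Hpos r Hr.
  assert (CB : continuous B 0).
  { unfold B. apply cont2_axis. exact (Ck2_lap 0 L CL). }
  assert (Hloc : locally 0 (fun s => 0 < B s)).
  { apply CB. apply (open_gt 0 (B 0)). exact Hpos. }
  destruct Hloc as [eps Heps].
  assert (HB0 : forall s, 0 < s -> 0 <= B s).
  { intros s Hs. specialize (HB s ltac:(lra)). specialize (Part1 s ltac:(lra)). unfold g, w in Part1; cbv beta in Part1.
    assert (Hvu : 0 < V s 0 <= U s 0) by (split; [apply PV|lra]). pose proof (Rpower_neg_anti (V s 0) (U s 0) q Hq Hvu). unfold B. change (bilap w s 0 >= Rpower (V s 0) (- q) - Rpower (U s 0) (- q)) in HB. lra. }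
  assert (HBe : forall s, 0 < s < eps -> 0 < B s).
  { intros s Hs. apply Heps. unfold ball; simpl; unfold AbsRing_ball, abs, minus, plus, opp; simpl.
    rewrite Ropp_0, Rplus_0_r, Rabs_pos_eq; lra. }
  pose proof (strict_main g g1 g2 h h1 h2 B Hg Hg1 Hh Hh1 Hhg HBh eps g0 h0 HB0 (cond_pos eps) HBe r Hr).
  unfold g, w in H; cbv beta in H. lra.
Qed.
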